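(* An $S$-claw $\mathcal{F}=(f_s:I_s\to[n]\mid s\in S)$ in $\Delta$ is strongly biCartesian if and only if it is compatible.
   Context: $\Delta$: simplex category of nonempty finite linear orders $[n]$ and weakly monotone maps. An $S$-claw on $[n]$ ($S$ finite) is a family of morphisms $f_s:I_s\to[n]$. It is strongly biCartesian if it extends to an $S$-cube $Q:\mathcal{P}(S)^{\mathrm{op}}\to\Delta$ ($\mathcal{P}(S)$ the subset poset) with $Q(\emptyset)=[n]$, $Q(\{s\})\to Q(\emptyset)$ equal to $f_s$, such that every square $Q(T\cup\{s,s'\})\to Q(T\cup\{s\}),Q(T\cup\{s'\})\to Q(T)$ ($s\neq s'\notin T$) is both a pullback and a pushout in $\Delta$. It is compatible if (BC1) for each $i\in[n]$ at most one $s$ has $f_s^{-1}\{i\}$ not a singleton, and (BC2) for each $0<i\le n$ at most one $s$ has $\{i-1,i\}\not\subseteq f_s(I_s)$. *)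

(* Defs.v *)
(* The simplex category Delta, encoded concretely:
   the object [k] = {0,...,k} is represented by the natural number k;
   a morphism [m] -> [n] is a function g : nat -> nat that is weakly
   monotone on {0..m} and maps {0..m} into {0..n}; two morphisms [m] -> [n]
   are equal iff they agree on {0..m}. *)
From mathcomp Require Import all_boot.
Set Implicit Arguments. Unset Strict Implicit. Unset Printing Implicit Defensive.

Definition is_hom (m n : nat) (g : nat -> nat) : Prop :=
  (forall i, i <= m -> g i <= n) /\
  (forall i j, i <= j -> j <= m -> g i <= g j).

Definition eqon (m : nat) (g h : nat -> nat) : Prop :=
  forall i, i <= m -> g i = h i.

(* Square   A --a--> B
            |        |
            b        c
            v        v
            C --d--> D     in Delta (a,b,c,d assumed morphisms). *)
Definition commutes (A : nat) (a b c d : nat -> nat) : Prop :=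
  eqon A (c \o a) (d \o b).

Definition is_pullback (A B C D : nat) (a b c d : nat -> nat) : Prop :=
  commutes A a b c d /\
  forall (X : nat) (u v : nat -> nat),
    is_hom X B u -> is_hom X C v -> eqon X (c \o u) (d \o v) ->
    exists w, [/\ is_hom X A w, eqon X (a \o w) u, eqon X (b \o w) v &
      forall w', is_hom X A w' -> eqon X (a \o w') u -> eqon X (b \o w') v ->
        eqon X w w'].

Definition is_pushout (A B C D : nat) (a b c d : nat -> nat) : Prop :=
  commutes A a b c d /\
  forall (X : nat) (u v : nat -> nat),
    is_hom B X u -> is_hom C X v -> eqon A (u \o a) (v \o b) ->
    exists w, [/\ is_hom D X w, eqon B (w \o c) u, eqon C (w \o d) v &
      forall w', is_hom D X w' -> eqon B (w' \o c) u -> eqon C (w' \o d) v ->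
        eqon D w w'].

(* An S-cube Q : P(S)^op -> Delta: object Q(T) = [dim T], and for T \subset T'
   the morphism Q(T') -> Q(T) is qmap T T'. *)
Definition is_cube (S : finType) (dim : {set S} -> nat)
    (qmap : {set S} -> {set S} -> nat -> nat) : Prop :=
  [/\ forall T T' : {set S}, T \subset T' -> is_hom (dim T') (dim T) (qmap T T'),
      forall T : {set S}, eqon (dim T) (qmap T T) id &
      forall T T' T'' : {set S}, T \subset T' -> T' \subset T'' ->
        eqon (dim T'') (qmap T T'') (qmap T T' \o qmap T' T'')].

Definition cube_biCartesian (S : finType) (dim : {set S} -> nat)
    (qmap : {set S} -> {set S} -> nat -> nat) : Prop :=
  forall (T : {set S}) (s s' : S), s != s' -> s \notin T -> s' \notin T ->
    let A := T :|: [set s; s'] in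
    let B := s |: T in
    let C := s' |: T in
    is_pullback (dim A) (dim B) (dim C) (dim T)
      (qmap B A) (qmap C A) (qmap T B) (qmap T C) /\
    is_pushout (dim A) (dim B) (dim C) (dim T)
      (qmap B A) (qmap C A) (qmap T B) (qmap T C).

Definition is_claw (S : finType) (n : nat) (m : S -> nat) (f : S -> nat -> nat)
  : Prop := forall s, is_hom (m s) n (f s).

Definition strongly_biCartesian (S : finType) (n : nat) (m : S -> nat)
    (f : S -> nat -> nat) : Prop :=
  exists (dim : {set S} -> nat) (qmap : {set S} -> {set S} -> nat -> nat),
    [/\ is_cube dim qmap, cube_biCartesian dim qmap,
        dim set0 = n,
        forall s, dim [set s] = m s
        & forall s, eqon (m s) (qmap set0 [set s]) (f s)].

Definition fibre_card (S : finType) (m : S -> nat) (f : S -> nat -> nat)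
    (s : S) (i : nat) : nat :=
  count (fun j => f s j == i) (iota 0 (m s).+1).

Definition in_image (S : finType) (m : S -> nat) (f : S -> nat -> nat)
    (s : S) (i : nat) : bool :=
  has (fun j => f s j == i) (iota 0 (m s).+1).

Definition compatible (S : finType) (n : nat) (m : S -> nat)
    (f : S -> nat -> nat) : Prop :=
  (* (BC1) *)
  (forall i, i <= n -> forall s s',
     fibre_card m f s i != 1 -> fibre_card m f s' i != 1 -> s = s') /\
  (* (BC2) *)
  (forall i, 0 < i <= n -> forall s s',
     ~~ (in_image m f s i.-1 && in_image m f s i) ->
     ~~ (in_image m f s' i.-1 && in_image m f s' i) -> s = s').

(* Main.v *)
Require Import Defs.
From mathcomp Require Import all_boot zify.
Set Implicit Arguments. Unset Strict Implicit. Unset Printing Implicit Defensive.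

Section Profile.
Variable n : nat.
Definition PS (N : nat -> nat) i := \sum_(j < i) N j.

Lemma PS0 N : PS N 0 = 0. Proof. by rewrite /PS big_ord0. Qed.
Lemma PSS N i : PS N i.+1 = PS N i + N i. Proof. by rewrite /PS big_ord_recr. Qed.
Lemma PS_mono N i j : i <= j -> PS N i <= PS N j.
Proof.
elim: j => [|j IH]; first by rewrite leqn0 => /eqP->.
rewrite leq_eqVlt => /orP[/eqP->//|]; rewrite ltnS => /IH; rewrite PSS; lia.
Qed.
Lemma PS_ext N N' i : (forall j, j < i -> N j = N' j) -> PS N i = PS N' i.
Proof. by move=> H; apply: eq_bigr => j _; apply: H. Qed.

Definition idx N k := find (fun i => k < PS N i.+1) (iota 0 n.+1).
Definition enc N i r := PS N i + r.
Definition off N k := k - PS N (idx N k).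
Definition qm N' N k := enc N' (idx N k) (minn (off N k) (N' (idx N k)).-1).
Definition dimN N := (PS N n.+1).-1.

Lemma find_iota_spec (a : pred nat) L i : i < L -> a i ->
  (forall j, j < i -> ~~ a j) -> find a (iota 0 L) = i.
Proof.
move=> iL ai H.
have hs : has a (iota 0 L) by apply/hasP; exists i => //; rewrite mem_iota.
have := hs; rewrite has_find size_iota => cL.
have := nth_find 0 hs; rewrite nth_iota // add0n => ac.
case: (ltngtP (find a (iota 0 L)) i) => // h.
- by have := H _ h; rewrite ac.
- by have := before_find 0 h; rewrite nth_iota // add0n ai.
Qed.

Lemma idx_uniq N k i : i <= n -> PS N i <= k < PS N i.+1 -> idx N k = i.
Proof.
move=> iN /andP[h1 h2]; apply: find_iota_spec => //.
move=> j ji; rewrite -leqNgt; apply: leq_trans h1; exact: PS_mono.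
Qed.

Lemma PS_exists N k L : k < PS N L -> exists2 i, i < L & PS N i <= k < PS N i.+1.
Proof.
elim: L => [|L IH]; first by rewrite PS0.
case: (ltnP k (PS N L)) => h1 h2.
  by case: (IH h1) => i iL hi; exists i => //; lia.
by exists L => //; rewrite h1.
Qed.

Lemma enc_lt N i r : r < N i -> enc N i r < PS N i.+1.
Proof. rewrite /enc PSS; lia. Qed.

Lemma enc_dec N i r : i <= n -> r < N i -> idx N (enc N i r) = i /\ off N (enc N i r) = r.
Proof.
move=> iN rN; have e : idx N (enc N i r) = i.
  by apply: idx_uniq => //; rewrite enc_lt // /enc leq_addr.
by split=> //; rewrite /off e /enc; lia.
Qed.

Lemma enc_dim N i r : i <= n -> r < N i -> enc N i r <= dimN N.
Proof.
move=> iN rN; have := enc_lt rN; have := @PS_mono N i.+1 n.+1 iN.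
rewrite /dimN; lia.
Qed.

Lemma decP N k : k <= dimN N -> 0 < PS N n.+1 ->
  exists i r, [/\ i <= n, r < N i & k = enc N i r].
Proof.
rewrite /dimN => kd p; have : k < PS N n.+1 by lia.
case/PS_exists => i iN /andP[h1 h2]; exists i, (k - PS N i); split => //.
  by move: h2; rewrite PSS; lia.
rewrite /enc; lia.
Qed.

Lemma enc_lex N i r i' r' : r < N i -> (i < i' \/ (i = i' /\ r <= r')) ->
  enc N i r <= enc N i' r'.
Proof.
move=> rN [h|[-> h]]; last by rewrite /enc leq_add2l.
have := enc_lt rN; have := PS_mono N h; rewrite /enc; lia.
Qed.

Lemma enc_leP N i r i' r' : r < N i -> r' < N i' -> enc N i r <= enc N i' r' ->
  i < i' \/ (i = i' /\ r <= r').
Proof.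
move=> rN rN' h; case: (ltngtP i i') => [h'|h'|e]; [by left| |].
  have := enc_lt rN'; have := PS_mono N h'; move: h; rewrite /enc; lia.
right; subst i'; split => //; move: h; by rewrite /enc leq_add2l.
Qed.

Lemma enc_inj N i r i' r' : r < N i -> r' < N i' -> enc N i r = enc N i' r' ->
  i = i' /\ r = r'.
Proof.
move=> rN rN' e.
have h1 := enc_leP rN rN' (eq_leq e).
have h2 := enc_leP rN' rN (eq_leq (esym e)).
lia.
Qed.

Lemma qm_enc N' N i r : i <= n -> r < N i ->
  qm N' N (enc N i r) = enc N' i (minn r (N' i).-1).
Proof. by move=> iN rN; rewrite /qm; case: (enc_dec iN rN) => -> ->. Qed.

End Profile.


Lemma hom_cut M g k : (forall i j, i <= j -> j <= M -> g i <= g j) ->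
  is_hom M 1 (fun x => k <= g x).
Proof.
move=> mono; split=> [i _|i j ij jM]; first exact: leq_b1.
case: (leqP k (g i)) => h //=.
by rewrite (leq_trans h (mono _ _ ij jM)).
Qed.

Lemma hom_const M X x : x <= X -> is_hom M X (fun _ => x).
Proof. by move=> h; split. Qed.

Section Converse.
Variables (n M1 M2 P : nat) (f1 f2 a b : nat -> nat).
Hypotheses (hf1 : is_hom M1 n f1) (hf2 : is_hom M2 n f2)
  (ha : is_hom P M1 a) (hb : is_hom P M2 b)
  (pb : is_pullback P M1 M2 n a b f1 f2) (po : is_pushout P M1 M2 n a b f1 f2).

Lemma conv_J k : k <= n -> (exists2 x, x <= M1 & f1 x = k) \/ (exists2 y, y <= M2 & f2 y = k).
Proof.
move=> kn.
case: (boolP [exists x : 'I_M1.+1, f1 x == k]) => [/existsP[x /eqP e]|h1].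
  by left; exists x => //; rewrite -ltnS.
case: (boolP [exists x : 'I_M2.+1, f2 x == k]) => [/existsP[x /eqP e]|h2].
  by right; exists x => //; rewrite -ltnS.
exfalso.
have n1 x : x <= M1 -> f1 x != k.
  by move=> xM; apply: contra h1 => e; apply/existsP; exists (@Ordinal M1.+1 x xM).
have n2 x : x <= M2 -> f2 x != k.
  by move=> xM; apply: contra h2 => e; apply/existsP; exists (@Ordinal M2.+1 x xM).
case: po => com /(_ 1 (fun x => k <= f1 x) (fun x => k <= f2 x)).
case.
- by apply: hom_cut => i j; case: hf1 => _; apply.
- by apply: hom_cut => i j; case: hf2 => _; apply.
- by move=> p pP /=; have := com p pP; rewrite /= => ->.
move=> w [_ e1 e2 uq].
have w1 : is_hom n 1 (fun j => k <= j) by apply: hom_cut.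
have w2 : is_hom n 1 (fun j => k < j) by apply: hom_cut.
have u1 := uq _ w1 (fun x _ => erefl) (fun x _ => erefl).
have u2 := uq _ w2.
have : eqon n w (fun j => k < j).
  apply: u2 => x xM /=.
  - by have := n1 x xM; rewrite ltn_neqAle eq_sym => ->.
  - by have := n2 x xM; rewrite ltn_neqAle eq_sym => ->.
move=> /(_ k kn); rewrite (u1 k kn) /= leqnn ltnn //.
Qed.

Lemma conv_C2 k x x' y y' : x < x' -> x' <= M1 -> f1 x = k -> f1 x' = k ->
  y < y' -> y' <= M2 -> f2 y = k -> f2 y' = k -> False.
Proof.
move=> xx x'M e1 e1' yy y'M e2 e2'.
case: pb => _ H.
have [p1 [hp1 ea1 eb1 _]] := H 0 (fun _ => x) (fun _ => y')
   (hom_const _ (ltnW (leq_trans xx x'M))) (hom_const _ y'M)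
   (fun _ _ => etrans e1 (esym e2')).
have [p2 [hp2 ea2 eb2 _]] := H 0 (fun _ => x') (fun _ => y)
   (hom_const _ x'M) (hom_const _ (ltnW (leq_trans yy y'M)))
   (fun _ _ => etrans e1' (esym e2)).
have := ea1 0 (leqnn 0); have := eb1 0 (leqnn 0).
have := ea2 0 (leqnn 0); have := eb2 0 (leqnn 0).
case: hp1 => b1 _; case: hp2 => b2 _.
have B1 := b1 0 (leqnn 0); have B2 := b2 0 (leqnn 0).
move=> /= q1 q2 q3 q4.
case: (leqP (p1 0) (p2 0)) => h.
- by have := (proj2 hb) _ _ h B2; rewrite q1 q3; lia.
- by have := (proj2 ha) _ _ (ltnW h) B1; rewrite q2 q4; lia.
Qed.

Lemma conv_E k y y' : k <= n -> (forall x, x <= M1 -> f1 x != k) ->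
  y < y' -> y' <= M2 -> f2 y = k -> f2 y' = k -> False.
Proof.
move=> kn n1 yy y'M e e'.
case: po => com /(_ 1 (fun x => k < f1 x) (fun z => y' <= z)).
case.
- by apply: hom_cut => i j; case: hf1 => _; apply.
- by apply: hom_cut.
- move=> p pP /=; have /= cp := com p pP; rewrite cp.
  have aP := (proj1 ha) p pP; have bP := (proj1 hb) p pP.
  have := n1 _ aP; rewrite cp => ne.
  case: (ltngtP k (f2 (b p))) ne => // h _.
  + case: (leqP y' (b p)) => // h2.
    by have := (proj2 hf2) _ _ (ltnW h2) y'M; rewrite e'; lia.
  + case: (leqP y' (b p)) => // h2.
    by have := (proj2 hf2) _ _ h2 bP; rewrite e'; lia.
move=> w [_ _ e2 _].
have := e2 y (ltnW (leq_trans yy y'M)); have := e2 y' y'M.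
rewrite /= e e' leqnn leqNgt yy /= => ->.
done.
Qed.

Lemma conv_B i : 0 < i <= n -> (forall x, x <= M1 -> f1 x != i.-1) ->
  (forall y, y <= M2 -> f2 y != i) -> False.
Proof.
move=> /andP[i0 iN] n1 n2.
have [[x0 x0M ex0]|[y1 y1M /eqP]] := conv_J iN; last by rewrite (negbTE (n2 _ y1M)).
have [[x1 x1M /eqP]|[y0 y0M ey0]] := conv_J (leq_trans (leq_pred i) iN);
  first by rewrite (negbTE (n1 _ x1M)).
case: po => com /(_ 1 (fun x => i < f1 x) (fun z => i.-1 <= f2 z)).
case.
- by apply: hom_cut => p q; case: hf1 => _; apply.
- by apply: hom_cut => p q; case: hf2 => _; apply.
- move=> p pP /=.
  have aP := (proj1 ha) p pP; have bP := (proj1 hb) p pP.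
  have /= cp := com p pP.
  have := n1 _ aP; have := n2 _ bP; rewrite cp.
  move: (f2 (b p)) => K; move=> /eqP h1 /eqP h2.
  case: (ltnP i K) => h; case: (leqP i.-1 K) => h' //; lia.
move=> w [[_ wm] e1 e2 _].
have := e1 x0 x0M; have := e2 y0 y0M; rewrite /= ex0 ey0 ltnn leqnn /=.
have := wm i.-1 i (leq_pred i) iN; lia.
Qed.

End Converse.


Lemma pb_transport A B C D a b c d c' d' : is_pullback A B C D a b c d ->
  is_hom A B a -> is_hom A C b -> eqon B c c' -> eqon C d d' ->
  is_pullback A B C D a b c' d'.
Proof.
move=> [com H] ha hb ec ed; split.
  move=> p pA /=; rewrite -ec ?(proj1 ha) // -ed ?(proj1 hb) //; exact: com.
move=> X u v hu hv e; apply: H => // x xX /=.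
rewrite ec ?(proj1 hu) // ed ?(proj1 hv) //; exact: e.
Qed.

Lemma po_transport A B C D a b c d c' d' : is_pushout A B C D a b c d ->
  is_hom A B a -> is_hom A C b -> eqon B c c' -> eqon C d d' ->
  is_pushout A B C D a b c' d'.
Proof.
move=> [com H] ha hb ec ed; split.
  move=> p pA /=; rewrite -ec ?(proj1 ha) // -ed ?(proj1 hb) //; exact: com.
move=> X u v hu hv e; have [w [hw e1 e2 uq]] := H X u v hu hv e.
exists w; split => //.
- by move=> x xB /=; rewrite -ec //; exact: e1.
- by move=> x xB /=; rewrite -ed //; exact: e2.
- move=> w' hw' e1' e2'; apply: uq => // x xB /=.
  + by rewrite ec //; exact: e1'.
  + by rewrite ed //; exact: e2'.
Qed.

Lemma count2 (p : pred nat) L : 1 < count p (iota 0 L) ->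
  exists x x', [/\ x < x', x' < L, p x & p x'].
Proof.
elim: L => [|L IH] //.
have -> : iota 0 L.+1 = iota 0 L ++ [:: L] by rewrite -addn1 iotaD.
rewrite count_cat /= addn0.
case: (ltnP 1 (count p (iota 0 L))) => h.
  by case: (IH h) => x [x' [h1 h2 h3 h4]]; exists x, x'; split => //; lia.
case pL: (p L) => /= h'; last by lia.
have : has p (iota 0 L) by rewrite has_count; lia.
case/hasP => x; rewrite mem_iota add0n => /andP[_ xL] px.
by exists x, L; split => //; lia.
Qed.

Lemma count0 (p : pred nat) L x : count p (iota 0 L) = 0 -> x < L -> ~~ p x.
Proof.
move=> h xL; have : ~~ has p (iota 0 L) by rewrite has_count h.
by move/hasPn; apply; rewrite mem_iota.
Qed.

Section ConvMain.
Variables (S : finType) (n : nat) (m : S -> nat) (f : S -> nat -> nat).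
Hypothesis hcl : is_claw n m f.

Lemma notin_image s i : ~~ in_image m f s i -> forall x, x <= m s -> f s x != i.
Proof. by move=> /hasPn h x xm; apply: h; rewrite mem_iota. Qed.

Lemma conv_main : strongly_biCartesian n m f -> compatible n m f.
Proof.
case=> dim [qmap [[c1 c2 c3] bic d0 d1 e]].
have sq : forall s s', s != s' ->
   let a := qmap [set s] (set0 :|: [set s; s']) in
   let b := qmap [set s'] (set0 :|: [set s; s']) in
   [/\ is_hom (dim (set0 :|: [set s; s'])) (m s) a,
       is_hom (dim (set0 :|: [set s; s'])) (m s') b,
       is_pullback (dim (set0 :|: [set s; s'])) (m s) (m s') n a b (f s) (f s') &
       is_pushout (dim (set0 :|: [set s; s'])) (m s) (m s') n a b (f s) (f s')].
  move=> s s' ne /=.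
  have ns : s \notin (set0 : {set S}) by rewrite inE.
  have ns' : s' \notin (set0 : {set S}) by rewrite inE.
  have [pb po] := bic set0 s s' ne ns ns'.
  rewrite /= !setU0 d0 !d1 in pb po.
  have ha : is_hom (dim (set0 :|: [set s; s'])) (m s) (qmap [set s] (set0 :|: [set s; s'])).
    by rewrite -d1; apply: c1; rewrite set0U subsetUl.
  have hb : is_hom (dim (set0 :|: [set s; s'])) (m s') (qmap [set s'] (set0 :|: [set s; s'])).
    by rewrite -d1; apply: c1; rewrite set0U subsetUr.
  split => //.
  - by apply: pb_transport pb ha hb (e s) (e s').
  - by apply: po_transport po ha hb (e s) (e s').
split.
- move=> i iN s s' h1 h2; case: (eqVneq s s') => // ne; exfalso.
  have [ha hb pb po] := sq s s' ne.
  have [ha' hb' pb' po'] := sq s' s (contra_neq esym ne).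
  move: h1 h2; rewrite /fibre_card.
  case E1: (count _ (iota 0 (m s).+1)) => [|[|k1]] // _;
  case E2: (count _ (iota 0 (m s').+1)) => [|[|k2]] // _.
  + have n1 x : x <= m s -> f s x != i by move=> xm; apply: (count0 E1).
    have n2 x : x <= m s' -> f s' x != i by move=> xm; apply: (count0 E2).
    have := conv_J (hcl s) (hcl s') po iN.
    by case=> [[x xm /eqP]|[x xm /eqP]]; [rewrite (negbTE (n1 _ xm))|rewrite (negbTE (n2 _ xm))].
  + have n1 x : x <= m s -> f s x != i by move=> xm; apply: (count0 E1).
    have [y [y' [yy yM /eqP py /eqP py']]] : exists x x', [/\ x < x', x' < (m s').+1, f s' x == i & f s' x' == i].
      by apply: count2; rewrite E2.
    exact: (conv_E (hcl s) (hcl s') ha hb po iN n1 yy yM py py').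
  + have n2 x : x <= m s' -> f s' x != i by move=> xm; apply: (count0 E2).
    have [y [y' [yy yM /eqP py /eqP py']]] : exists x x', [/\ x < x', x' < (m s).+1, f s x == i & f s x' == i].
      by apply: count2; rewrite E1.
    exact: (conv_E (hcl s') (hcl s) ha' hb' po' iN n2 yy yM py py').
  + have [x [x' [xx xM /eqP px /eqP px']]] : exists x x', [/\ x < x', x' < (m s).+1, f s x == i & f s x' == i].
      by apply: count2; rewrite E1.
    have [y [y' [yy yM /eqP py /eqP py']]] : exists x x', [/\ x < x', x' < (m s').+1, f s' x == i & f s' x' == i].
      by apply: count2; rewrite E2.
    exact: (conv_C2 ha hb pb xx xM px px' yy yM py py').
- move=> i /andP[i0 iN] s s' h1 h2; case: (eqVneq s s') => // ne; exfalso.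
  have [ha hb pb po] := sq s s' ne.
  have [ha' hb' pb' po'] := sq s' s (contra_neq esym ne).
  have iN' : i.-1 <= n by lia.
  have i0N : 0 < i <= n by rewrite i0.
  move: h1 h2; rewrite !negb_and => /orP[h1|h1] /orP[h2|h2].
  + have := conv_J (hcl s) (hcl s') po iN'.
    by case=> [[x xm /eqP]|[x xm /eqP]]; [rewrite (negbTE (notin_image h1 xm))|rewrite (negbTE (notin_image h2 xm))].
  + exact: (conv_B (hcl s) (hcl s') ha hb po i0N (notin_image h1) (notin_image h2)).
  + exact: (conv_B (hcl s') (hcl s) ha' hb' po' i0N (notin_image h2) (notin_image h1)).
  + have := conv_J (hcl s) (hcl s') po iN.
    by case=> [[x xm /eqP]|[x xm /eqP]]; [rewrite (negbTE (notin_image h1 xm))|rewrite (negbTE (notin_image h2 xm))].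
Qed.

End ConvMain.


Lemma cnt_split (g : nat -> nat) i l :
  count (fun j => g j < i.+1) l = count (fun j => g j < i) l + count (fun j => g j == i) l.
Proof.
elim: l => //= x l ->; case: (ltngtP (g x) i) => h /=.
- by rewrite ltnS (ltnW h); lia.
- by rewrite ltnNge h /=.
- by rewrite h ltnSn; lia.
Qed.

Lemma PS1 i : PS (fun _ => 1) i = i.
Proof. by rewrite /PS sum_nat_const card_ord muln1. Qed.

Lemma cnt_le (g : nat -> nat) M k : k <= M ->
  (forall i j, i <= j -> j <= M -> g i <= g j) ->
  count (fun j => g j < g k) (iota 0 M.+1) <= k.
Proof.
move=> kM mono.
have -> : M.+1 = k + (M.+1 - k) by lia.
rewrite iotaD count_cat add0n.
rewrite (@eq_in_count _ _ pred0 (iota k _)) ?count_pred0.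
  by rewrite addn0; apply: leq_trans (count_size _ _) _; rewrite size_iota.
move=> j; rewrite mem_iota => /andP[h1 h2] /=.
by rewrite ltnNge mono //; lia.
Qed.

Lemma cnt_gt (g : nat -> nat) M k : k <= M ->
  (forall i j, i <= j -> j <= M -> g i <= g j) ->
  k < count (fun j => g j < (g k).+1) (iota 0 M.+1).
Proof.
move=> kM mono.
have -> : M.+1 = k.+1 + (M - k) by lia.
rewrite iotaD count_cat add0n.
rewrite (@eq_in_count _ _ predT (iota 0 k.+1)) ?count_predT ?size_iota.
  by lia.
move=> j; rewrite mem_iota => /andP[h1 h2] /=.
by rewrite ltnS mono //; lia.
Qed.

Definition NT (S : finType) (m : S -> nat) (f : S -> nat -> nat) (T : {set S}) i :=
  \prod_(t in T) fibre_card m f t i.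

Definition cdim (S : finType) n m f (T : {set S}) := dimN n (@NT S m f T).
Definition cq (S : finType) n m f (T T' : {set S}) := qm n (@NT S m f T) (@NT S m f T').

Section Fwd.
Variables (S : finType) (n : nat) (m : S -> nat) (f : S -> nat -> nat).
Hypothesis hcl : is_claw n m f.
Hypothesis hc : compatible n m f.

Implicit Types (T : {set S}) (s : S).
Local Notation c := (fibre_card m f).
Local Notation N := (NT m f).

Lemma in_image_c s i : in_image m f s i = (0 < c s i).
Proof. by rewrite /in_image /fibre_card has_count. Qed.

Lemma cpos_hit s i : 0 < c s i -> exists2 x, x <= m s & f s x = i.
Proof.
rewrite -in_image_c => /hasP[x]; rewrite mem_iota add0n ltnS => /andP[_ xm] /eqP e.
by exists x.
Qed.

Lemma hit_cpos s i x : x <= m s -> f s x = i -> 0 < c s i.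
Proof.
move=> xm e; rewrite -in_image_c; apply/hasP; exists x; first by rewrite mem_iota.
by apply/eqP.
Qed.

Lemma NT0 i : N set0 i = 1. Proof. by rewrite /NT big_set0. Qed.
Lemma NT1 s i : N [set s] i = c s i. Proof. by rewrite /NT big_set1. Qed.
Lemma NTU1 s T i : s \notin T -> N (s |: T) i = c s i * N T i.
Proof. by move=> h; rewrite /NT big_setU1. Qed.

Lemma NT_sub T T' i : T \subset T' -> N T' i = N T i * N (T' :\: T) i.
Proof. by move=> h; rewrite /NT (big_setID T) /= (setIidPr h). Qed.

Lemma NT_pos_sub T T' i : T \subset T' -> 0 < N T' i -> 0 < N T i /\ N T i <= N T' i.
Proof.
move=> h; rewrite (NT_sub i h) muln_gt0 => /andP[h1 h2]; split => //.
by rewrite leq_pmulr.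
Qed.

Lemma NT_pos T i : (forall s, 0 < c s i) -> 0 < N T i.
Proof. by move=> h; apply: prodn_cond_gt0 => t _. Qed.

Lemma NT_zero T i : N T i = 0 -> exists2 t, t \in T & c t i = 0.
Proof.
move=> h; case: (boolP [exists t in T, c t i == 0]) => [/existsP[t /andP[tT /eqP e]]|h'].
  by exists t.
exfalso; suff : 0 < N T i by rewrite h.
apply: prodn_cond_gt0 => t tT; rewrite lt0n; apply: contra h' => e.
by apply/existsP; exists t; rewrite tT.
Qed.

Lemma helly : exists2 i0, i0 <= n & forall s, 0 < c s i0.
Proof.
case: (pickP (fun _ : S => true)) => [s0 _|h0]; last first.
  by exists 0 => // s; have := h0 s.
have [sm _ em] := @eq_bigmax_cond S predT (fun s => f s 0) (ltac:(by apply/card_gt0P; exists s0)).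
set i0 := f sm 0 in em.
have i0n : i0 <= n by apply: (proj1 (hcl sm)).
exists i0 => // s; rewrite lt0n; apply/negP => /eqP z.
have ms : f s 0 <= i0 by rewrite -em; apply: (@leq_bigmax_cond S predT (fun s => f s 0)).
case: (posnP i0) => i00.
  have e0 : f s 0 = i0 by move: ms; rewrite i00 leqn0 => /eqP.
  by have := hit_cpos (leq0n (m s)) e0; rewrite z.
have sms : sm = s.
  apply: (proj2 hc i0) => //; first by rewrite i00 i0n.
  - rewrite negb_and; apply/orP; left; rewrite /in_image.
    apply/hasPn => x; rewrite mem_iota add0n ltnS => /andP[_ xm].
    have := (proj2 (hcl sm)) 0 x (leq0n x) xm; rewrite -/i0; lia.
  - by rewrite negb_and !in_image_c z ltnn orbT.
have := hit_cpos (leq0n (m sm)) (erefl i0); rewrite sms z //.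
Qed.

Lemma tot_pos T : 0 < PS (N T) n.+1.
Proof.
case: helly => i0 i0n h.
have := NT_pos T h; have := @PS_mono (N T) i0.+1 n.+1 i0n; rewrite PSS; lia.
Qed.

Lemma cdec T k : k <= cdim n m f T ->
  exists i r, [/\ i <= n, r < N T i & k = enc (N T) i r].
Proof. by move=> h; apply: decP h (tot_pos T). Qed.

Lemma cenc T i r : i <= n -> r < N T i -> enc (N T) i r <= cdim n m f T.
Proof. exact: enc_dim. Qed.

Lemma cq_enc T T' i r : i <= n -> r < N T' i ->
  cq n m f T T' (enc (N T') i r) = enc (N T) i (minn r (N T i).-1).
Proof. exact: qm_enc. Qed.

Lemma cube_ok : is_cube (cdim n m f) (cq n m f).
Proof.
split.
- move=> T T' sub; split.
  + move=> k /cdec[i [r [iN rN ->]]]; rewrite cq_enc //.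
    have [p _] := NT_pos_sub sub (leq_ltn_trans (leq0n r) rN).
    by apply: cenc => //; lia.
  + move=> k k' kk /[dup] k'd /cdec[i' [r' [iN' rN' e']]].
    have /cdec[i [r [iN rN e]]] : k <= cdim n m f T' by lia.
    subst k k'; rewrite !cq_enc //.
    have [p _] := NT_pos_sub sub (leq_ltn_trans (leq0n r) rN).
    apply: enc_lex; first by lia.
    by case: (enc_leP rN rN' kk) => [h|[<- h]]; [left|right; split => //; lia].
- move=> T k /cdec[i [r [iN rN ->]]]; rewrite cq_enc //=; congr enc; lia.
- move=> T T' T'' s1 s2 k /cdec[i [r [iN rN ->]]].
  rewrite /= !cq_enc //; last first.
    have [p _] := NT_pos_sub s2 (leq_ltn_trans (leq0n r) rN); lia.
  have [p1 q1] := NT_pos_sub s2 (leq_ltn_trans (leq0n r) rN).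
  have [p2 q2] := NT_pos_sub s1 p1.
  congr enc; lia.
Qed.

Lemma cdim0 : cdim n m f set0 = n.
Proof.
rewrite /cdim /dimN (@PS_ext _ (fun _ => 1)) ?PS1 // => j _; exact: NT0.
Qed.

Lemma PSc s i : PS (N [set s]) i = count (fun j => f s j < i) (iota 0 (m s).+1).
Proof.
elim: i => [|i IH].
  by rewrite PS0 (@eq_count _ _ pred0) ?count_pred0.
by rewrite PSS IH NT1 cnt_split.
Qed.

Lemma cdim1 s : cdim n m f [set s] = m s.
Proof.
rewrite /cdim /dimN PSc (@eq_in_count _ _ predT) ?count_predT ?size_iota //.
move=> j; rewrite mem_iota add0n ltnS => /andP[_ jm] /=.
by rewrite ltnS (proj1 (hcl s)).
Qed.

Lemma cq01 s : eqon (m s) (cq n m f set0 [set s]) (f s).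
Proof.
move=> k km.
have ix : idx n (N [set s]) k = f s k.
  apply: idx_uniq; first exact: (proj1 (hcl s)).
  rewrite !PSc; apply/andP; split.
  - by apply: cnt_le => //; apply: (proj2 (hcl s)).
  - by apply: cnt_gt => //; apply: (proj2 (hcl s)).
rewrite /cq /qm ix NT0 /= minn0 /enc addn0 (@PS_ext _ (fun _ => 1)) ?PS1 // => j _.
exact: NT0.
Qed.

End Fwd.


Lemma mono_succ (g : nat -> nat) D : (forall k, k < D -> g k <= g k.+1) ->
  forall i j, i <= j -> j <= D -> g i <= g j.
Proof.
move=> h i j; elim: j => [|j IH]; first by rewrite leqn0 => /eqP->.
rewrite leq_eqVlt => /orP[/eqP->//|]; rewrite ltnS => ij jD.
by apply: leq_trans (IH ij (ltnW jD)) (h _ jD).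
Qed.

Section Square.
Variables (S : finType) (n : nat) (m : S -> nat) (f : S -> nat -> nat).
Hypothesis hcl : is_claw n m f.
Hypothesis hc : compatible n m f.
Implicit Types (s : S).
Local Notation c := (fibre_card m f).
Local Notation N := (NT m f).
Variables (T : {set S}) (s s' : S).
Hypotheses (ne : s != s') (nsT : s \notin T) (ns'T : s' \notin T).
Let A := T :|: [set s; s'].
Let B := s |: T.
Let C := s' |: T.

Lemma NB_eq i : N B i = c s i * N T i. Proof. exact: NTU1. Qed.
Lemma NC_eq i : N C i = c s' i * N T i. Proof. exact: NTU1. Qed.
Lemma NA_eq i : N A i = c s i * (c s' i * N T i).
Proof.
have -> : A = s |: (s' |: T) by apply/setP => x; rewrite /A !inE; case: (x == s); case: (x == s'); case: (x \in T).
rewrite NTU1 ?NTU1 //; by rewrite !inE negb_or ne nsT.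
Qed.

Lemma Kone s1 i : i <= n -> c s1 i != 1 -> forall t, t != s1 -> c t i = 1.
Proof.
move=> iN h1 t ts; case: (eqVneq (c t i) 1) => // h2.
by move: ts; rewrite ((proj1 hc) i iN s1 t h1 h2) eqxx.
Qed.

Lemma NT1' s1 i : i <= n -> s1 \notin T -> c s1 i != 1 -> N T i = 1.
Proof.
move=> iN nT h; rewrite /NT big1 // => t tT; apply: (Kone iN h).
by apply: contraNneq nT => <-.
Qed.

Lemma cases3 i : i <= n ->
  [\/ [/\ c s i != 1, N T i = 1 & c s' i = 1],
      [/\ c s' i != 1, N T i = 1 & c s i = 1] |
      c s i = 1 /\ c s' i = 1].
Proof.
move=> iN; case: (eqVneq (c s i) 1) => h1; case: (eqVneq (c s' i) 1) => h2.
- by constructor 3.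
- by constructor 2; split => //; apply: NT1' h2.
- by constructor 1; split => //; apply: NT1' h1.
- by have := Kone iN h1 (ltac:(by rewrite eq_sym) : s' != s); move=> /eqP; rewrite (negbTE h2).
Qed.

Lemma cases_ne i : i <= n -> c s i != 1 -> N T i = 1 /\ c s' i = 1.
Proof.
move=> iN h; case: (cases3 iN) => [[_ -> ->]|[_ _ e]|[e _]] //; by rewrite e in h.
Qed.

Lemma sub_TB : T \subset B. Proof. exact: subsetUr. Qed.
Lemma sub_TC : T \subset C. Proof. exact: subsetUr. Qed.
Lemma sub_BA : B \subset A.
Proof. by apply/subsetP => x; rewrite /A /B !inE; case: (x == s); case: (x \in T); rewrite ?orbT. Qed.
Lemma sub_CA : C \subset A.
Proof. by apply/subsetP => x; rewrite /A /C !inE; case: (x == s'); case: (x \in T); rewrite ?orbT. Qed.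

Lemma sq_commutes : commutes (cdim n m f A) (cq n m f B A) (cq n m f C A) (cq n m f T B) (cq n m f T C).
Proof.
case: (cube_ok hcl hc) => _ _ c3 k kA /=.
have /= e1 := c3 _ _ _ sub_TB sub_BA k kA.
have /= e2 := c3 _ _ _ sub_TC sub_CA k kA.
by rewrite -e1 -e2.
Qed.

Lemma pb_pt i r r' : i <= n -> r < N B i -> r' < N C i ->
  minn r (N T i).-1 = minn r' (N T i).-1 ->
  [/\ maxn r r' < N A i, minn (maxn r r') (N B i).-1 = r, minn (maxn r r') (N C i).-1 = r' &
     forall q, q < N A i -> minn q (N B i).-1 = r -> minn q (N C i).-1 = r' -> q = maxn r r'].
Proof.
move=> iN; rewrite NA_eq NB_eq NC_eq.
case: (cases3 iN) => [[h1 -> ->]|[h1 -> ->]|[-> ->]]; rewrite ?muln1 ?mul1n => h2 h3 h4;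
  (split; [lia|lia|lia|move=> q; lia]).
Qed.

Lemma pos_of_A i q : q < N A i -> 0 < N B i /\ 0 < N C i.
Proof.
rewrite NA_eq NB_eq NC_eq => h.
have : 0 < c s i * (c s' i * N T i) by lia.
rewrite !muln_gt0 => /and3P[-> -> ->]; done.
Qed.

Lemma sq_pullback : is_pullback (cdim n m f A) (cdim n m f B) (cdim n m f C) (cdim n m f T)
  (cq n m f B A) (cq n m f C A) (cq n m f T B) (cq n m f T C).
Proof.
split; first exact: sq_commutes.
move=> X u v hu hv e.
have D : forall x, x <= X -> exists i r r', [/\ i <= n, r < N B i, r' < N C i,
    u x = enc (N B) i r & v x = enc (N C) i r' /\ minn r (N T i).-1 = minn r' (N T i).-1].
  move=> x xX.
  have [i [r [iN rN eu]]] := cdec hcl hc ((proj1 hu) x xX).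
  have [i' [r' [iN' rN' ev]]] := cdec hcl hc ((proj1 hv) x xX).
  have := e x xX; rewrite /= eu ev !cq_enc //.
  have p1 : 0 < N T i by move: rN; rewrite NB_eq; case: (N T i) => //; lia.
  have p2 : 0 < N T i' by move: rN'; rewrite NC_eq; case: (N T i') => //; lia.
  move=> ee.
  have b1 : minn r (N T i).-1 < N T i by lia.
  have b2 : minn r' (N T i').-1 < N T i' by lia.
  case: (enc_inj b1 b2 ee) => ei em; subst i'.
  by exists i, r, r'; split.
pose w x := enc (N A) (idx n (N B) (u x)) (maxn (off n (N B) (u x)) (off n (N C) (v x))).
have wE : forall x i r r', i <= n -> r < N B i -> r' < N C i ->
    u x = enc (N B) i r -> v x = enc (N C) i r' -> w x = enc (N A) i (maxn r r').
  move=> x i r r' iN rN rN' eu ev; rewrite /w eu ev.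
  by case: (enc_dec iN rN) => -> ->; case: (enc_dec iN rN') => _ ->.
exists w; split.
- split.
  + move=> x xX; have [i [r [r' [iN rN rN' eu [ev em]]]]] := D x xX.
    rewrite (wE x i r r') //; apply: cenc => //.
    by case: (pb_pt iN rN rN' em).
  + move=> x y xy yX.
    have [i [r [r' [iN rN rN' eu [ev em]]]]] := D x (leq_trans xy yX).
    have [j [q [q' [jN qN qN' eu' [ev' em']]]]] := D y yX.
    rewrite (wE x i r r') // (wE y j q q') //.
    have hu' := (proj2 hu) x y xy yX; have hv' := (proj2 hv) x y xy yX.
    rewrite /= eu eu' in hu'; rewrite /= ev ev' in hv'.
    have [b1 _ _ _] := pb_pt iN rN rN' em.
    apply: enc_lex => //.
    case: (enc_leP rN qN hu') => [h|[eij h]]; first by left.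
    subst j; right; split => //.
    case: (enc_leP rN' qN' hv') => [h'|[_ h']]; first by lia.
    lia.
- move=> x xX; have [i [r [r' [iN rN rN' eu [ev em]]]]] := D x xX.
  have [b1 b2 b3 _] := pb_pt iN rN rN' em.
  by rewrite /= (wE x i r r') // cq_enc // b2 eu.
- move=> x xX; have [i [r [r' [iN rN rN' eu [ev em]]]]] := D x xX.
  have [b1 b2 b3 _] := pb_pt iN rN rN' em.
  by rewrite /= (wE x i r r') // cq_enc // b3 ev.
- move=> w' hw' e1 e2 x xX.
  have [i [r [r' [iN rN rN' eu [ev em]]]]] := D x xX.
  have [b1 b2 b3 b4] := pb_pt iN rN rN' em.
  have [i0 [q [iN0 qN ew]]] := cdec hcl hc ((proj1 hw') x xX).
  have [pB pC] := pos_of_A qN.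
  have := e1 x xX; have := e2 x xX.
  rewrite /= ew !cq_enc // eu ev.
  have d1 : minn q (N B i0).-1 < N B i0 by lia.
  have d2 : minn q (N C i0).-1 < N C i0 by lia.
  move=> /(enc_inj d2 rN') [ei1 eq1] /(enc_inj d1 rN) [ei2 eq2].
  subst i0; rewrite (wE x i r r') // (b4 q) //.
Qed.

Lemma gap_contra s1 s2 i i' : s1 != s2 -> s1 \notin T -> s2 \notin T ->
  i < i' -> i' <= n -> c s1 i = 0 -> c s2 i' = 0 ->
  (forall j, i < j -> j < i' -> N T j = 0) -> False.
Proof.
move=> d n1 n2 ii i'N z1 z2 gap.
have h1 : ~~ (in_image m f s1 i.+1.-1 && in_image m f s1 i.+1).
  by rewrite /= !in_image_c z1.
have iN : 0 < i.+1 <= n by apply/andP; split => //; lia.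
case: (ltngtP i.+1 i') => [lt|gt|eqi]; [|lia|].
- have [t tT zt] := NT_zero (gap _ (ltnSn i) lt).
  have h2 : ~~ (in_image m f t i.+1.-1 && in_image m f t i.+1).
    by rewrite !in_image_c zt andbF.
  have := (proj2 hc) _ iN _ _ h1 h2 => est.
  by move: n1; rewrite est tT.
- have h2 : ~~ (in_image m f s2 i.+1.-1 && in_image m f s2 i.+1).
    by rewrite eqi !in_image_c z2 andbF.
  by move: d; rewrite ((proj2 hc) _ iN _ _ h1 h2) eqxx.
Qed.

Lemma cs1_NB i : c s i = 1 -> N B i = N T i.
Proof. by move=> h; rewrite NB_eq h mul1n. Qed.

Lemma sq_pushout : is_pushout (cdim n m f A) (cdim n m f B) (cdim n m f C) (cdim n m f T)
  (cq n m f B A) (cq n m f C A) (cq n m f T B) (cq n m f T C).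
Proof.
split; first exact: sq_commutes.
move=> X u v hu hv e.
have H : forall i q, i <= n -> q < N A i ->
    u (enc (N B) i (minn q (N B i).-1)) = v (enc (N C) i (minn q (N C i).-1)).
  move=> i q iN qN; have := e _ (cenc iN qN); rewrite /= !cq_enc //.
pose w k := let i := idx n (N T) k in let r := off n (N T) k in
  if c s i == 1 then u (enc (N B) i r) else v (enc (N C) i r).
have wE : forall i r, i <= n -> r < N T i ->
    w (enc (N T) i r) = if c s i == 1 then u (enc (N B) i r) else v (enc (N C) i r).
  by move=> i r iN rN; rewrite /w; case: (enc_dec iN rN) => -> ->.
have uB : forall i r, i <= n -> r < N B i -> u (enc (N B) i r) <= X.
  by move=> i r iN rN; apply: (proj1 hu); apply: cenc.
have vC : forall i r, i <= n -> r < N C i -> v (enc (N C) i r) <= X.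
  by move=> i r iN rN; apply: (proj1 hv); apply: cenc.
have uM : forall i r j q, i <= n -> j <= n -> r < N B i -> q < N B j ->
    (i < j \/ i = j /\ r <= q) -> u (enc (N B) i r) <= u (enc (N B) j q).
  move=> i r j q iN jN rN qN h; apply: (proj2 hu); first exact: enc_lex.
  exact: cenc.
have vM : forall i r j q, i <= n -> j <= n -> r < N C i -> q < N C j ->
    (i < j \/ i = j /\ r <= q) -> v (enc (N C) i r) <= v (enc (N C) j q).
  move=> i r j q iN jN rN qN h; apply: (proj2 hv); first exact: enc_lex.
  exact: cenc.
exists w; split.
- split.
  + move=> k /(cdec hcl hc) [i [r [iN rN ->]]]; rewrite wE //.
    case: (cases3 iN) => [[h1 e1 e2]|[h1 e1 e2]|[e1 e2]]; rewrite ?e2 ?e1 /=.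
    * rewrite (negbTE h1); apply: vC => //; rewrite NC_eq e1 e2; lia.
    * apply: uB => //; rewrite NB_eq e2; lia.
    * apply: uB => //; rewrite NB_eq e1; lia.
  + apply: mono_succ => k kT.
    have [i [r [iN rN ek]]] := cdec hcl hc (ltnW kT).
    have [i' [r' [iN' rN' ek']]] := cdec hcl hc (kT : k.+1 <= _).
    have kk : enc (N T) i r <= enc (N T) i' r' by rewrite -ek -ek'; lia.
    rewrite ek' ek !wE //.
    case: (enc_leP rN rN' kk) => [lt|[eqi le]].
    *
      have gap : forall j, i < j -> j < i' -> N T j = 0.
        move=> j h1 h2.
        have := enc_lt rN; have := @PS_mono (N T) i.+1 j h1.
        have := @PS_mono (N T) j.+1 i' h2; rewrite PSS.
        move: ek ek'; rewrite /enc; lia.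
      have pT : 0 < N T i by lia.
      have pT' : 0 < N T i' by lia.
      case: (eqVneq (c s i) 1) => hi; case: (eqVneq (c s i') 1) => hi' /=.
      - by apply: uM; [done|done|rewrite cs1_NB|rewrite cs1_NB|left].
      - case: (cases_ne iN' hi') => e1 e2.
        have r'0 : r' = 0 by lia.
        subst r'.
        case: (posnP (c s' i)) => z1.
          case: (posnP (c s i')) => z2.
            by exfalso; apply: (gap_contra (s1 := s') (s2 := s) _ ns'T nsT lt iN' z1 z2 gap); rewrite eq_sym.
          have := H i' 0 iN' (ltac:(rewrite NA_eq e1 e2; lia)).
          rewrite !min0n => <-.
          apply: uM; [done|done|by rewrite cs1_NB|by rewrite NB_eq e1 muln1|by left].
        have qA : (N A i).-1 < N A i by rewrite NA_eq hi; nia.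
        have := H i _ iN qA.
        have hB : (N B i).-1 <= (N A i).-1 by rewrite NA_eq NB_eq hi; nia.
        rewrite (minn_idPr hB) => eq1.
        apply: (@leq_trans (u (enc (N B) i (N B i).-1))).
          have nb := cs1_NB hi.
          apply: uM; [done|done|lia|lia|right; split => //; lia].
        rewrite eq1; apply: vM; [done|done| |by rewrite NC_eq e1 e2|by left].
        rewrite NC_eq NA_eq hi mul1n minnn.
        have : 0 < c s' i * N T i by rewrite muln_gt0 z1 pT.
        lia.
      - case: (cases_ne iN hi) => e1 e2.
        have r0 : r = 0 by lia.
        subst r.
        case: (posnP (c s i)) => z1.
          case: (posnP (c s' i')) => z2.
            by exfalso; apply: (gap_contra ne nsT ns'T lt iN' z1 z2 gap).
          have := H i' 0 iN' (ltac:(rewrite NA_eq hi'; nia)).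
          rewrite !min0n => eq1.
          apply: (@leq_trans (v (enc (N C) i' 0))).
            apply: vM; [done|done|by rewrite NC_eq e1 e2|by rewrite NC_eq muln_gt0 z2 pT'|by left].
          have nb := cs1_NB hi'.
          rewrite -eq1; apply: uM; [done|done|lia|lia|right; split => //; lia].
        have qA : (N A i).-1 < N A i by rewrite NA_eq e1 e2 !muln1; lia.
        have := H i _ iN qA.
        have -> : minn (N A i).-1 (N C i).-1 = 0 by rewrite NC_eq e1 e2 minn0.
        move=> eq1; rewrite -eq1.
        have nb := cs1_NB hi'.
        apply: uM; [done|done|rewrite NB_eq e1 muln1; lia|lia|by left].
      - case: (cases_ne iN hi) => e1 e2.
        case: (cases_ne iN' hi') => e1' e2'.
        apply: vM; [done|done|rewrite NC_eq e1 e2; lia|rewrite NC_eq e1' e2'; lia|by left].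
    * subst i'.
      case: (eqVneq (c s i) 1) => hi /=.
      - have nb := cs1_NB hi.
        apply: uM; [done|done|lia|lia|by right].
      - case: (cases_ne iN hi) => e1 e2.
        apply: vM; [done|done|rewrite NC_eq e1 e2; lia|rewrite NC_eq e1 e2; lia|by right].
- move=> k /(cdec hcl hc) [i [ρ [iN ρN ->]]] /=.
  have pT : 0 < N T i by move: ρN; rewrite NB_eq; case: (N T i) => //; lia.
  rewrite cq_enc // wE //; last by lia.
  case: (eqVneq (c s i) 1) => hi /=.
  + have nb := cs1_NB hi.
    by rewrite (_ : minn ρ (N T i).-1 = ρ) //; lia.
  + case: (cases_ne iN hi) => e1 e2.
    have qA : ρ < N A i by move: ρN; rewrite NA_eq NB_eq e1 e2.
    have := H i ρ iN qA.
    rewrite (_ : minn ρ (N B i).-1 = ρ); last by lia.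
    rewrite (_ : minn ρ (N C i).-1 = 0); last by rewrite NC_eq e1 e2 minn0.
    by rewrite e1 minn0 => ->.
- move=> k /(cdec hcl hc) [i [ρ [iN ρN ->]]] /=.
  have pT : 0 < N T i by move: ρN; rewrite NC_eq; case: (N T i) => //; lia.
  rewrite cq_enc // wE //; last by lia.
  case: (eqVneq (c s i) 1) => hi /=.
  + have qA : ρ < N A i by move: ρN; rewrite NA_eq NC_eq hi mul1n.
    have := H i ρ iN qA.
    rewrite (_ : minn ρ (N C i).-1 = ρ); last by lia.
    by rewrite cs1_NB.
  + case: (cases_ne iN hi) => e1 e2.
    have ρ0 : ρ = 0 by move: ρN; rewrite NC_eq e1 e2; lia.
    by subst ρ; rewrite min0n.
- move=> w' hw' e1 e2 k /(cdec hcl hc) [i [r [iN rN ->]]].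
  rewrite wE //.
  case: (eqVneq (c s i) 1) => hi /=.
  + have rB : r < N B i by rewrite cs1_NB.
    have nb := cs1_NB hi.
    have := e1 _ (cenc iN rB); rewrite /= cq_enc // (_ : minn r (N T i).-1 = r); last by lia.
    by move=> ->.
  + case: (cases_ne iN hi) => et es'.
    have rC : r < N C i by rewrite NC_eq es' mul1n.
    have := e2 _ (cenc iN rC); rewrite /= cq_enc // (_ : minn r (N T i).-1 = r); last by lia.
    by move=> ->.
Qed.

End Square.


Theorem corollary4p1p5 (S : finType) (n : nat) (m : S -> nat)
    (f : S -> nat -> nat) :
  is_claw n m f ->
  (strongly_biCartesian n m f <-> compatible n m f).
Proof.
move=> hcl; split; first exact: conv_main.
move=> hc; exists (cdim n m f), (cq n m f); split.
- exact: cube_ok.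
- move=> T s s' ne ns ns' /=; split.
  + exact: sq_pullback.
  + exact: sq_pushout.
- exact: cdim0.
- exact: cdim1.
- exact: cq01.
Qed.
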